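(* Let $\mathcal{T}$ be a $2$-covered $3$-graph on $k\ge7$ vertices such that $\tau(\mathcal{T}[S])\le1$ for every set $S\subseteq V(\mathcal{T})$ with $|S|=7$. Then $\mathcal{T}$ is a star.
   Context: A $3$-graph is $2$-covered if every pair of its vertices is contained in some edge. $\tau(\mathcal{H})$ is the transversal number: the minimum size of a vertex set meeting every edge of $\mathcal{H}$ ($0$ if $\mathcal{H}$ has no edges). $\mathcal{T}[S]$ is the induced subgraph on $S$. A $3$-graph is a star if all its edges contain a common vertex. *)

(* Defs.v *)
From mathcomp Require Import all_boot.
Set Implicit Arguments. Unset Strict Implicit. Unset Printing Implicit Defensive.

Definition is_3graph (T : finType) (E : {set {set T}}) : Prop :=
  forall e, e \in E -> #|e| = 3.

Definition two_covered (T : finType) (E : {set {set T}}) : Prop :=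
  forall x y : T, x != y -> exists2 e, e \in E & (x \in e) && (y \in e).

Definition transversal (T : finType) (E : {set {set T}}) (C : {set T}) : bool :=
  [forall e in E, [exists v in e, v \in C]].

(* transversal number: minimum size of a transversal (0 if no edges).
   setT is a transversal whenever all edges are nonempty, so the
   default value #|T| does not affect the minimum. *)
Definition tau (T : finType) (E : {set {set T}}) : nat :=
  \big[minn/#|T|]_(C : {set T} | transversal E C) #|C|.

Definition induced (T : finType) (E : {set {set T}}) (S : {set T}) : {set {set T}} :=
  [set e in E | e \subset S].

Definition is_star (T : finType) (E : {set {set T}}) : Prop :=
  exists v : T, forall e, e \in E -> v \in e.

(* Main.v *)
Require Import Defs.
From mathcomp Require Import all_boot.
From mathcomp Require Import zify.
Set Implicit Arguments. Unset Strict Implicit.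

Lemma bigmin_le1 (T : finType) (P : pred {set T}) (f : {set T} -> nat) d :
  1 < d -> \big[minn/d]_(C | P C) f C <= 1 -> exists C, P C && (f C <= 1).
Proof.
move=> Hd Hm; case: (boolP [exists C, P C && (f C <= 1)]) => [/existsP //|/existsPn Hn].
suff : 1 < \big[minn/d]_(C | P C) f C by rewrite ltnNge Hm.
apply: (big_ind (fun x => 1 < x)) => //.
  by move=> a b Ha Hb; rewrite leq_min Ha Hb.
by move=> C PC; have := Hn C; rewrite PC /= -ltnNge.
Qed.

Lemma extend7 (T : finType) (S : {set T}) :
  7 <= #|T| -> #|S| <= 7 -> exists2 S' : {set T}, S \subset S' & #|S'| = 7.
Proof.
move=> HT HS.
have : forall n (S : {set T}), #|S| + n = 7 -> exists2 S' : {set T}, S \subset S' & #|S'| = 7.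
  elim=> [|n IH] S0 H0; first by exists S0; rewrite ?subxx //; lia.
  case: (pickP (fun x => x \notin S0)) => [x Hx|Hall]; last first.
    have : #|T| <= #|S0|.
      apply: subset_leq_card; apply/subsetP => y _.
      by have := Hall y; rewrite /= => /negbFE.
    lia.
  have [S' H1 H2] := IH (x |: S0) ltac:(rewrite cardsU1 Hx; lia).
  exists S' => //; exact: subset_trans (subsetU1 x S0) H1.
by move=> H; apply: (H (7 - #|S|)); lia.
Qed.

Lemma common_small (T : finType) (E : {set {set T}}) :
  7 <= #|T| ->
  (forall S : {set T}, #|S| = 7 -> tau (induced E S) <= 1) ->
  forall S : {set T}, #|S| <= 7 ->
  exists v, forall e, e \in E -> e \subset S -> v \in e.
Proof.
move=> HT H7 S HS.
have [S' HSS' HS'] := extend7 HT HS.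
have := H7 S' HS'; rewrite /tau => /bigmin_le1.
case=> [|C /andP [HC Hc]]; first lia.
have [v0 _] : exists v0, v0 \in S' by apply/card_gt0P; rewrite HS'.
move: HC Hc => /= HC; rewrite leq_eqVlt ltnS leqn0 => /orP [/cards1P [v HCv]| /eqP/cards0_eq HCv]; subst C.
  exists v => e He HeS; move/forallP: HC => /(_ e) /implyP.
  rewrite inE He (subset_trans HeS HSS') => /(_ isT) /existsP [w /andP [Hw]].
  by rewrite inE => /eqP <-.
exists v0 => e He HeS; move/forallP: HC => /(_ e) /implyP.
rewrite inE He (subset_trans HeS HSS') => /(_ isT) /existsP [w /andP [Hw]].
by rewrite inE.
Qed.

Lemma sub3 (T : finType) (A : {set T}) x y z :
  x \in A -> y \in A -> z \in A -> x != y -> y != z -> z != x -> #|A| = 3 ->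
  A = [set x; y; z].
Proof.
move=> Hx Hy Hz xy yz zx HA; apply/eqP; rewrite eq_sym eqEcard; apply/andP; split.
  by apply/subsetP => w; rewrite !inE => /orP [/orP [] |] /eqP ->.
rewrite HA; apply/card_gt2P; exists x, y, z; split; split => //; by rewrite !inE eqxx ?orbT.
Qed.

Lemma step2 (T : finType) (E : {set {set T}}) :
  is_3graph E ->
  (forall S : {set T}, #|S| <= 7 -> exists v, forall e, e \in E -> e \subset S -> v \in e) ->
  forall e1 e2 e3, e1 \in E -> e2 \in E -> e3 \in E ->
  exists v, [&& v \in e1, v \in e2 & v \in e3].
Proof.
move=> H3 Hc.
have pair : forall f1 f2, f1 \in E -> f2 \in E -> exists v, (v \in f1) && (v \in f2).
  move=> f1 f2 H1 H2.
  have [|v Hv] := Hc (f1 :|: f2).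
    by have := cardsUI f1 f2; rewrite (H3 _ H1) (H3 _ H2); lia.
  by exists v; rewrite Hv ?subsetUl ?subsetUr // Hv ?subsetUl ?subsetUr.
move=> e1 e2 e3 H1 H2 H3'.
have [a /andP [a1 a2]] := pair _ _ H1 H2.
have [b /andP [b1 b3]] := pair _ _ H1 H3'.
have [|v Hv] := Hc (e1 :|: e2 :|: e3).
  have := cardsUI e1 e2; have := cardsUI (e1 :|: e2) e3.
  have : 0 < #|e1 :&: e2| by apply/card_gt0P; exists a; rewrite inE a1 a2.
  have : 0 < #|(e1 :|: e2) :&: e3| by apply/card_gt0P; exists b; rewrite !inE b1 b3.
  rewrite (H3 _ H1) (H3 _ H2) (H3 _ H3'); lia.
exists v; apply/and3P; split; apply: Hv => //;
  by apply/subsetP => w Hw; rewrite !inE Hw ?orbT.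
Qed.

Lemma step3 (T : finType) (E : {set {set T}}) :
  is_3graph E ->
  (forall S : {set T}, #|S| <= 7 -> exists v, forall e, e \in E -> e \subset S -> v \in e) ->
  forall e1 e2 e3 e4, e1 \in E -> e2 \in E -> e3 \in E -> e4 \in E ->
  exists v, [&& v \in e1, v \in e2, v \in e3 & v \in e4].
Proof.
move=> H3 Hc e1 e2 e3 e4 H1 H2 H3' H4.
have [x4 /and3P [x41 x42 x43]] := step2 H3 Hc H1 H2 H3'.
have [x3 /and3P [x31 x32 x34]] := step2 H3 Hc H1 H2 H4.
have [x2 /and3P [x21 x23 x24]] := step2 H3 Hc H1 H3' H4.
have [x1 /and3P [x12 x13 x14]] := step2 H3 Hc H2 H3' H4.
case: (boolP (x4 \in e4)) => [x44|x44]; first by exists x4; rewrite x41 x42 x43 x44.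
case: (boolP (x3 \in e3)) => [x33|x33]; first by exists x3; rewrite x31 x32 x33 x34.
case: (boolP (x2 \in e2)) => [x22|x22]; first by exists x2; rewrite x21 x22 x23 x24.
case: (boolP (x1 \in e1)) => [x11|x11]; first by exists x1; rewrite x11 x12 x13 x14.
have ne : forall a b (f : {set T}), a \in f -> b \notin f -> a != b.
  by move=> a b f Ha Hb; apply/eqP => h; subst; rewrite Ha in Hb.
have E2 := sub3 x12 x32 x42 (ne _ _ _ x13 x33) (ne _ _ _ x34 x44) (ne _ _ _ x41 x11) (H3 _ H2).
have E3 := sub3 x13 x23 x43 (ne _ _ _ x12 x22) (ne _ _ _ x24 x44) (ne _ _ _ x41 x11) (H3 _ H3').
have E4 := sub3 x14 x24 x34 (ne _ _ _ x12 x22) (ne _ _ _ x23 x33) (ne _ _ _ x31 x11) (H3 _ H4).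
have [|v Hv] := Hc (x1 |: e1).
  by rewrite cardsU1 (H3 _ H1); case: (x1 \notin e1).
exists v; apply/and4P; split; apply: Hv => //.
- exact: subsetUr.
- by rewrite E2; apply/subsetP => w; rewrite !inE => /orP [/orP [] |] /eqP ->; rewrite ?eqxx ?x31 ?x41 ?orbT.
- by rewrite E3; apply/subsetP => w; rewrite !inE => /orP [/orP [] |] /eqP ->; rewrite ?eqxx ?x21 ?x41 ?orbT.
by rewrite E4; apply/subsetP => w; rewrite !inE => /orP [/orP [] |] /eqP ->; rewrite ?eqxx ?x21 ?x31 ?orbT.
Qed.

Theorem lemma4p4 (T : finType) (E : {set {set T}}) :
  is_3graph E -> two_covered E -> 7 <= #|T| ->
  (forall S : {set T}, #|S| = 7 -> tau (induced E S) <= 1) ->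
  is_star E.
Proof.
move=> H3 _ HT H7.
have Hc := common_small HT H7.
have : 0 < #|T| by lia.
case/card_gt0P => v0 _.
case: (pickP (mem E)) => [e He|HE]; last first.
  by exists v0 => e; rewrite /= [e \in E]HE.
case: (boolP [exists v, [forall f in E, v \in f]]) => [/existsP [v /forallP Hv]|/existsPn Hn].
  by exists v => f Hf; have := Hv f; rewrite Hf.
have wit : forall v, exists2 f, f \in E & v \notin f.
  move=> v; have := Hn v; rewrite negb_forall => /existsP [f].
  by rewrite negb_imply => /andP [Hf Hvf]; exists f.
have : 2 < #|e| by rewrite (H3 _ He).
case/card_gt2P => [x [y [z [[xe ye ze] [xy yz zx]]]]].
have Ee := sub3 xe ye ze xy yz zx (H3 _ He).
have [fx Hfx xf] := wit x.
have [fy Hfy yf] := wit y.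
have [fz Hfz zf] := wit z.
have [w /and4P [we wx wy wz]] := step3 H3 Hc He Hfx Hfy Hfz.
move: we; rewrite Ee !inE => /orP [/orP [] |] /eqP Hw; subst w.
- by rewrite wx in xf.
- by rewrite wy in yf.
by rewrite wz in zf.
Qed.
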